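(* Let $1\le\ell\le k-1$ be integers with $k-\ell$ not dividing $k$, and let $R$ be an $\ell$-connected $k$-graph. Then there is a $k$-uniform $\ell$-cycle $C$ with at most $k^4$ edges which is $k$-partite and such that the lattice $\mathcal{L}_C(R)$ is complete.
   Context: A $k$-graph has edges that are $k$-subsets of its vertex set. A ($k$-uniform) $\ell$-cycle is a $k$-graph whose vertices can be cyclically ordered so that every edge consists of $k$ cyclically consecutive vertices and consecutive edges intersect in exactly $\ell$ vertices. A $k$-graph is $k$-partite if its vertex set can be partitioned into $k$ parts so that every edge has exactly one vertex in each part. The $\ell$-line graph of $R$ has vertex set $E(R)$ with $e\sim f$ iff $|e\cap f|\ge\ell$; $R$ is $\ell$-connected if it has no isolated vertices and its edges induce a connected subgraph of the $\ell$-line graph. A homomorphism from $F$ to $R$ is a map $\phi\colon V(F)\to V(R)$ sending edges to edges; its indicator vector $\mathbf{1}_\phi\in\mathbb{N}^{V(R)}$ is $\mathbf{1}_\phi(v)=|\phi^{-1}(v)|$. The $F$-lattice $\mathcal{L}_F(R)\subseteq\mathbb{Z}^{V(R)}$ is the additive subgroup generated by all $\mathbf{1}_\phi$ with $\phi$ a homomorphism from $F$ to $R$; it is complete if it contains every $\mathbf{b}\in\mathbb{Z}^{V(R)}$ with $\sum_{v}\mathbf{b}(v)$ divisible by $|V(F)|$. *)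

(* Defs.v *)
From mathcomp Require Import all_boot all_algebra.
Set Implicit Arguments. Unset Strict Implicit. Unset Printing Implicit Defensive.
Import GRing.Theory Num.Theory.

Definition kgraph (k : nat) (V : finType) (E : {set {set V}}) : Prop :=
  forall e, e \in E -> #|e| = k.

Definition no_isolated (V : finType) (E : {set {set V}}) : Prop :=
  forall v : V, exists2 e, e \in E & v \in e.

Definition line_adj (V : finType) (l : nat) (E : {set {set V}}) : rel {set V} :=
  fun e f => [&& e \in E, f \in E & l <= #|e :&: f|].

Definition l_connected (V : finType) (l : nat) (E : {set {set V}}) : Prop :=
  no_isolated E /\
  forall e f, e \in E -> f \in E -> connect (line_adj l E) e f.

(* The k-uniform l-cycle with m edges: vertices 0..n-1 (n = m(k-l)) in cyclic
   order, edge i = the k cyclically consecutive vertices starting at i(k-l). *)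
Definition cyc_edge (k l m i : nat) : {set 'I_(m * (k - l))} :=
  [set x : 'I_(m * (k - l)) |
     [exists t : 'I_k, val x == (i * (k - l) + t) %% (m * (k - l))]].

Definition cyc_edges (k l m : nat) : {set {set 'I_(m * (k - l))}} :=
  [set cyc_edge k l m (val i) | i : 'I_m].

Definition is_lcycle (k l m : nat) : Prop :=
  forall i, i < m ->
    #|cyc_edge k l m i| = k /\
    #|cyc_edge k l m i :&: cyc_edge k l m (i.+1 %% m)| = l.

Definition kpartite (k : nat) (V : finType) (E : {set {set V}}) : Prop :=
  exists f : V -> 'I_k,
    forall e, e \in E -> forall p : 'I_k, #|[set v in e | f v == p]| = 1.

Definition is_hom (VC VR : finType) (EC : {set {set VC}}) (ER : {set {set VR}})
  (phi : {ffun VC -> VR}) : bool :=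
  [forall e in EC, (phi @: e) \in ER].

Definition ind (VC VR : finType) (phi : {ffun VC -> VR}) (v : VR) : nat :=
  #|[set x | phi x == v]|.

(* the F-lattice L_F(R) is complete: every integer vector whose coordinate sum
   is divisible by |V(F)| is an integer combination of indicator vectors of
   homomorphisms F -> R (there are finitely many such homomorphisms, so the
   generated subgroup is exactly the set of such combinations). *)
Definition lattice_complete (VC VR : finType) (EC : {set {set VC}})
  (ER : {set {set VR}}) : Prop :=
  forall b : {ffun VR -> int},
    (#|VC|%:Z %| (\sum_(v : VR) b v)%R)%Z ->
    exists c : {ffun {ffun VC -> VR} -> int},
      forall v : VR,
        b v = (\sum_(phi : {ffun VC -> VR} | is_hom EC ER phi)
                 c phi * (ind phi v)%:Z)%R.

(* Main.v *)
Require Import Defs.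
From mathcomp Require Import all_boot all_algebra.
From mathcomp Require Import fingroup perm zify.
Set Implicit Arguments. Unset Strict Implicit. Unset Printing Implicit Defensive.

Definition colG (q r b i : nat) : nat :=
  if (q == 1) && (i == 0) then nth 0 [:: 0; 1; 0; 2*r] (b %% 4)
  else if (q == 1) && (i == r) then nth 0 [:: 2*r; 2*r; 1; 1] (b %% 4)
  else if i < r then i*(q+1) + b %% (q+1) else r*(q+1) + (i - r)*q + b %% q.

Definition colF (d q r x : nat) : nat := colG q r (x %/ d) (x %% d).

Lemma exists_shift j p s : 0 < p -> s < p -> exists2 δ, δ < p & (j + δ) %% p = s.
Proof.
move=> p0 sp; set j0 := j %% p.
have j0p : j0 < p by rewrite ltn_pmod.
case: (leqP j0 s) => Hs.
  exists (s - j0); first lia.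
  by rewrite {1}(divn_eq j p) -/j0 -addnA subnKC // modnMDl modn_small.
exists (p + s - j0); first lia.
by rewrite {1}(divn_eq j p) -/j0 -addnA (_ : j0 + (p + s - j0) = p + s) ?modnMDl ?modnDl ?modn_small //; lia.
Qed.

Lemma pos_div d j δ i : i < d -> (j*d + (δ*d + i)) %/ d = j + δ.
Proof.
move=> id; have d0 : 0 < d by apply: leq_ltn_trans id.
by rewrite addnA -mulnDl divnMDl // divn_small // addn0.
Qed.

Lemma pos_mod d j δ i : i < d -> (j*d + (δ*d + i)) %% d = i.
Proof. by move=> id; rewrite addnA -mulnDl modnMDl modn_small. Qed.

Lemma colF_at d q r j δ i : i < d -> colF d q r (j*d + (δ*d + i)) = colG q r (j + δ) i.
Proof. by move=> id; rewrite /colF pos_div // pos_mod. Qed.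

Lemma rainbow_q1 d r j c : 0 < r -> r < d -> c < d + r ->
  exists2 t, t < d + r & colF d 1 r (j*d + t) = c.
Proof.
move=> r0 rd cdr.
have d0 : 0 < d by apply: leq_trans rd.
have G0 : forall b, colG 1 r b 0 = nth 0 [:: 0; 1; 0; 2*r] (b %% 4) by [].
have Gr : forall b, colG 1 r b r = nth 0 [:: 2*r; 2*r; 1; 1] (b %% 4).
  by move=> b; rewrite /colG /= eqn0Ngt r0 /= eqxx.
have P0 : colF d 1 r (j*d + 0) = colG 1 r j 0.
  by have := colF_at 1 r j 0 d0; rewrite mul0n !addn0.
have P1 : colF d 1 r (j*d + d) = colG 1 r (j+1) 0.
  by have := colF_at 1 r j 1 d0; rewrite mul1n !addn0.
have Pr : colF d 1 r (j*d + r) = colG 1 r j r.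
  by have := colF_at 1 r j 0 rd; rewrite mul0n add0n addn0.
have Hj1 : (j + 1) %% 4 = (j %% 4 + 1) %% 4 by rewrite modnDml.
case: (boolP ((c == 0) || (c == 1) || (c == 2*r))) => Hc.
  have t0 : 0 < d + r by lia.
  have td : d < d + r by lia.
  have tr : r < d + r by lia.
  have Hj4 : j %% 4 < 4 by rewrite ltn_pmod.
  rewrite G0 Hj1 in P1; rewrite G0 in P0; rewrite Gr in Pr.
  case: (j %% 4) Hj4 P0 Pr P1 => [|[|[|[|n]]]] //= _ P0 Pr P1;
  case/orP: Hc => [/orP[]|] /eqP ->.
  all: try (exists 0; [done|by rewrite P0]).
  all: try (exists d; [done|by rewrite P1]).
  all: try (exists r; [done|by rewrite Pr]).
move: Hc; rewrite !negb_or => /andP [/andP [c0 c1] c2].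
case: (ltnP c (2*r)) => Hc2.
  set i := c %/ 2; set s := c %% 2.
  have [δ δ2 Hδ] := exists_shift j (isT : 0 < 2) (ltn_pmod c (isT : 0 < 2)).
  have Hci : c = i * 2 + s by rewrite /i /s -divn_eq.
  have ir : i < r by rewrite /i ltn_divLR //; lia.
  have i0 : i != 0 by apply/eqP => Hi; move: c0 c1 Hci; rewrite Hi /s; lia.
  exists (δ*d + i).
    have : δ <= 1 by lia.
    by case: δ {δ2 Hδ} => [|[|]] //= _; lia.
  rewrite colF_at; last by lia.
  rewrite /colG /= (negbTE i0) ir.
  have -> : (i == r) = false by apply/eqP; lia.
  by rewrite /= Hδ -/s Hci.
exists (c - r); first lia.
rewrite -(add0n (c - r)) -(mul0n d) colF_at; last by lia.
rewrite /colG /= addn0.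
have -> : (c - r == 0) = false by apply/eqP; lia.
have -> : (c - r == r) = false by apply/eqP; move: c2 => /eqP; lia.
have -> : (c - r < r) = false by apply/negbTE; rewrite -leqNgt; lia.
by rewrite modn1 addn0 muln1; lia.
Qed.

Lemma colG_gen q r b i : q != 1 ->
  colG q r b i = if i < r then i*(q+1) + b %% (q+1) else r*(q+1) + (i - r)*q + b %% q.
Proof. by move=> q1; rewrite /colG (negbTE q1). Qed.

Lemma rainbow_q2 d q r j c : 0 < r -> r < d -> 1 < q -> c < q*d + r ->
  exists2 t, t < q*d + r & colF d q r (j*d + t) = c.
Proof.
move=> r0 rd q2 ck.
have q1 : q != 1 by rewrite neq_ltn q2 orbT.
have q0 : 0 < q by apply: ltnW.
case: (ltnP c (r*(q+1))) => Hc.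
  set i := c %/ (q+1); set s := c %% (q+1).
  have q10 : 0 < q + 1 by rewrite addn1.
  have [δ δq Hδ] := exists_shift j q10 (ltn_pmod c q10).
  have Hci : c = i * (q+1) + s by rewrite /i /s -divn_eq.
  have ir : i < r by rewrite /i ltn_divLR.
  exists (δ*d + i).
    have : δ * d <= q * d by apply: leq_mul => //; lia.
    lia.
  rewrite colF_at; last by lia.
  by rewrite colG_gen // ir Hδ -/s Hci.
set c' := c - r*(q+1).
have Hc' : c' < (d - r) * q.
  rewrite /c' mulnBl; move: ck Hc; rewrite mulnDr muln1 (mulnC d q) (mulnC r q); lia.
set i := r + c' %/ q; set s := c' %% q.
have [δ δq Hδ] := exists_shift j q0 (ltn_pmod c' q0).
have Hci : c' = (i - r) * q + s by rewrite /i /s addKn -divn_eq.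
have id : i < d.
  have : c' %/ q < d - r by rewrite ltn_divLR.
  rewrite /i; lia.
exists (δ*d + i).
  have : δ.+1 * d <= q * d by apply: leq_mul.
  rewrite mulSn; move: id; nia.
rewrite colF_at //.
rewrite colG_gen // ltnNge leq_addr /= Hδ -/s -addnA -Hci /c'.
by rewrite subnKC.
Qed.

Lemma card_seq (n : nat) (P : nat -> bool) (s : seq nat) :
  uniq s -> all (fun x => x < n) s -> (forall x, x < n -> P x = (x \in s)) ->
  #|[set x : 'I_n | P x]| = size s.
Proof.
move=> Us As HP.
have -> : #|[set x : 'I_n | P x]| = #|[set x : 'I_n | val x \in s]|.
  by apply: eq_card => x; rewrite !inE HP.
elim: s Us As {HP} => [|a s IH] /=.
  by move=> _ _; apply/eqP; rewrite cards_eq0; apply/eqP/setP => x; rewrite !inE.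
move=> /andP [Na Us] /andP [Ha As].
have -> : [set x : 'I_n | val x \in a :: s] =
          [set Ordinal Ha] :|: [set x : 'I_n | val x \in s].
  by apply/setP => x; rewrite !inE -val_eqE.
rewrite cardsU1 IH // inE /= Na.
by [].
Qed.

Lemma resP a D e x : e < D -> x < a * D ->
  (x %% D == e) = (x \in [seq t * D + e | t <- iota 0 a]).
Proof.
move=> eD xa; have D0 : 0 < D by apply: leq_ltn_trans eD.
apply/eqP/mapP => [He | [t Ht ->]].
  exists (x %/ D); last by rewrite {1}(divn_eq x D) He.
  by rewrite mem_iota add0n /= ltn_divLR.
by rewrite modnMDl modn_small.
Qed.

Lemma card_res a D e n : e < D -> n = a * D ->
  #|[set x : 'I_n | x %% D == e]| = a.
Proof.
move=> eD Hn; have D0 : 0 < D by apply: leq_ltn_trans eD.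
rewrite (@card_seq n (fun x => x %% D == e) [seq t * D + e | t <- iota 0 a]).
- by rewrite size_map size_iota.
- rewrite map_inj_uniq ?iota_uniq // => t1 t2 /eqP.
  by rewrite eqn_add2r eqn_pmul2r // => /eqP.
- apply/allP => x /mapP [t]; rewrite mem_iota add0n /= => Ht ->.
  rewrite Hn; apply: leq_trans (_ : t.+1 * D <= a * D); last by rewrite leq_mul2r Ht orbT.
  by rewrite mulSn addnC ltn_add2r.
- by move=> x Hx; rewrite (@resP a) // -Hn.
Qed.

Lemma mod_decomp x p d : x %% (p * d) = (x %/ d %% p) * d + x %% d.
Proof.
rewrite modn_divl -(modn_dvdm x (dvdn_mull p (dvdnn d))).
exact: divn_eq.
Qed.

Lemma eqn_pair d b i b' i' : i < d -> i' < d ->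
  (b * d + i == b' * d + i') = (b == b') && (i == i').
Proof.
move=> id id'; have d0 : 0 < d by apply: leq_ltn_trans id.
apply/eqP/andP => [H | [/eqP -> /eqP ->] //].
have H1 := congr1 (fun y => y %/ d) H; have H2 := congr1 (fun y => y %% d) H.
move: H1 H2 => /=; rewrite !divnMDl // !modnMDl !divn_small // !modn_small // !addn0.
by move=> -> ->.
Qed.

Definition mm (q : nat) := if q == 1 then 4 else q * (q + 1).

Lemma colF_period d q r x : 0 < d -> colF d q r (x %% (mm q * d)) = colF d q r x.
Proof.
move=> d0; rewrite /colF -modn_divl (modn_dvdm x (dvdn_mull _ (dvdnn d))).
set b := x %/ d; set i := x %% d.
rewrite /mm; case: (eqVneq q 1) => [-> | q1].
  rewrite /colG /= modn_mod !modn1.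
  by rewrite (modn_dvdm b (isT : 2 %| 4)).
rewrite !colG_gen //.
rewrite (modn_dvdm b (dvdn_mulr _ (dvdnn q))).
by rewrite (modn_dvdm b (dvdn_mull _ (dvdnn (q+1)))).
Qed.

Lemma colF_lt d q r x : 0 < r -> r < d -> 0 < q -> colF d q r x < q * d + r.
Proof.
move=> r0 rd q0; have d0 : 0 < d by lia.
rewrite /colF; set b := x %/ d; set i := x %% d.
have id : i < d by rewrite ltn_pmod.
case: (eqVneq q 1) => [Eq | q1].
  rewrite Eq /colG /=.
  have b4 : b %% 4 < 4 by rewrite ltn_pmod.
  case: (i == 0) => /=.
    by case: (b %% 4) b4 => [|[|[|[|n]]]] //=; lia.
  case: (i == r) => /=.
    by case: (b %% 4) b4 => [|[|[|[|n]]]] //=; lia.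
  rewrite modn1 addn0 mul1n.
  case: ifP => Hir.
    have : b %% 2 < 2 by rewrite ltn_pmod.
    lia.
  lia.
rewrite colG_gen //.
case: ifP => Hir.
  have : b %% (q+1) < q + 1 by rewrite ltn_pmod // addn1.
  have : i * (q+1) + q <= (r - 1) * (q + 1) + q.
    by rewrite leq_add2r leq_mul2r; apply/orP; right; lia.
  nia.
have : b %% q < q by rewrite ltn_pmod.
have : (i - r) * q <= (d - 1 - r) * q by rewrite leq_mul2r; apply/orP; right; lia.
nia.
Qed.

Lemma col0_q2 d q r x : 0 < r -> r < d -> 1 < q ->
  (colF d q r x == 0) = (x %% ((q+1) * d) == 0).
Proof.
move=> r0 rd q2; have d0 : 0 < d by lia.
have q1 : q != 1 by lia.
rewrite mod_decomp /colF colG_gen //; set b := x %/ d; set i := x %% d.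
have id : i < d by rewrite ltn_pmod.
case: ifP => Hir.
  rewrite addn_eq0 muln_eq0 addn1 /= addn_eq0 muln_eq0 (eqn0Ngt d) d0 /= orbF.
  by case: (i == 0); case: (b %% q.+1 == 0).
have rq : 0 < r * (q+1) by rewrite muln_gt0 r0 addn1.
apply/idP/idP => /eqP H; exfalso.
  by move: H => /eqP; rewrite -addnA addn_eq0 => /andP [/eqP H0 _]; rewrite H0 in rq.
by move: H => /eqP; rewrite addn_eq0 => /andP [_ /eqP Hi]; lia.
Qed.

Lemma colr_q2 d q r x : 0 < r -> r < d -> 1 < q ->
  (colF d q r x == r * (q+1)) = (x %% (q * d) == r).
Proof.
move=> r0 rd q2; have d0 : 0 < d by lia.
have q1 : q != 1 by lia.
rewrite mod_decomp /colF colG_gen //; set b := x %/ d; set i := x %% d.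
have id : i < d by rewrite ltn_pmod.
have bq : b %% q < q by rewrite ltn_pmod; lia.
have bq1 : b %% (q+1) < q + 1 by rewrite ltn_pmod; lia.
case: ifP => Hir.
  have H1 : i * (q+1) + b %% (q+1) < r * (q+1).
    have : i.+1 * (q+1) <= r * (q+1) by rewrite leq_mul2r Hir orbT.
    rewrite mulSn; lia.
  have H2 : b %% q * d + i != r.
    case: (b %% q) => [|n]; first by rewrite mul0n add0n; lia.
    rewrite mulSn; lia.
  by rewrite (negbTE H2); apply/negbTE; lia.
rewrite -addnA -{2}(addn0 (r * (q+1))) eqn_add2l addn_eq0 muln_eq0.
case: (eqVneq (b %% q) 0) => [-> | Hb].
  rewrite mul0n add0n andbT; apply/idP/idP => [/orP [] /eqP|/eqP ->].
  - lia.
  - lia.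
  by rewrite subnn eqxx.
rewrite andbF; apply/esym/negbTE.
have : d <= b %% q * d by rewrite leq_pmull //; lia.
lia.
Qed.

Lemma counts_q2 d q r n : 0 < r -> r < d -> 1 < q -> n = mm q * d ->
  #|[set x : 'I_n | colF d q r x == r * (q+1)]| =
  (#|[set x : 'I_n | colF d q r x == 0]|).+1.
Proof.
move=> r0 rd q2 Hn.
have q1 : q != 1 by lia.
have d0 : 0 < d by lia.
have E0 : #|[set x : 'I_n | colF d q r x == 0]| = q.
  transitivity #|[set x : 'I_n | x %% ((q+1)*d) == 0]|.
    by apply: eq_card => x; rewrite !inE col0_q2.
  apply: card_res; first by rewrite muln_gt0 addn1.
  by rewrite Hn /mm (negbTE q1) mulnA.
have Er : #|[set x : 'I_n | colF d q r x == r * (q+1)]| = q + 1.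
  transitivity #|[set x : 'I_n | x %% (q*d) == r]|.
    by apply: eq_card => x; rewrite !inE colr_q2.
  apply: card_res; first exact: leq_trans rd (leq_pmull _ (ltnW q2)).
  by rewrite Hn /mm (negbTE q1) mulnA (mulnC q).
by rewrite E0 Er addn1.
Qed.

Lemma col0_q1 d r x : 0 < r -> r < d ->
  (colF d 1 r x == 0) = (x %% (2 * d) == 0).
Proof.
move=> r0 rd; have d0 : 0 < d by lia.
rewrite mod_decomp /colF; move: (x %/ d) (x %% d) (ltn_pmod x d0) => b i id.
rewrite -(modn_dvdm b (isT : 2 %| 4)).
have b4 : b %% 4 < 4 by rewrite ltn_pmod.
rewrite /colG /=.
case: (eqVneq i 0) => [E | i0] /=.
  subst i; rewrite addn0 muln_eq0 (eqn0Ngt d) d0 orbF.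
  by case: (b %% 4) b4 => [|[|[|[|n]]]] //= _; lia.
have -> : ((b %% 4) %% 2 * d + i == 0) = false by apply/negbTE; lia.
case: (eqVneq i r) => [E | ir] /=.
  subst i; by case: (b %% 4) b4 => [|[|[|[|n]]]] //= _; lia.
case: ifP => _; lia.
Qed.

Lemma col1_q1 d r x : 0 < r -> r < d -> x < 4 * d ->
  (colF d 1 r x == 1) = (x \in [:: 1 * d + 0; 2 * d + r; 3 * d + r]).
Proof.
move=> r0 rd x4; have d0 : 0 < d by lia.
rewrite /colF.
have Ex : x = x %/ d * d + x %% d by rewrite -divn_eq.
have b4 : x %/ d < 4 by rewrite ltn_divLR.
have -> : (x \in [:: 1 * d + 0; 2 * d + r; 3 * d + r]) =
  (x %/ d * d + x %% d \in [:: 1 * d + 0; 2 * d + r; 3 * d + r]) by rewrite -Ex.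
rewrite !inE.
move: (x %/ d) (x %% d) (ltn_pmod x d0) b4 {Ex} => b i id b4.
rewrite !eqn_pair // /colG /=.
case: (eqVneq i 0) => [E | i0] /=.
  subst i; have -> : (0 == r) = false by apply/negbTE; lia.
  by case: b b4 => [|[|[|[|n]]]] //= _; apply/negbTE; lia.
case: (eqVneq i r) => [E | ir] /=.
  subst i; rewrite !andbT.
  by case: b b4 => [|[|[|[|n]]]] //= _; lia.
rewrite !andbF /=.
case: ifP => _; lia.
Qed.

Lemma counts_q1 d r n : 0 < r -> r < d -> n = mm 1 * d ->
  #|[set x : 'I_n | colF d 1 r x == 1]| =
  (#|[set x : 'I_n | colF d 1 r x == 0]|).+1.
Proof.
move=> r0 rd Hn; have d0 : 0 < d by lia.
have E0 : #|[set x : 'I_n | colF d 1 r x == 0]| = 2.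
  transitivity #|[set x : 'I_n | x %% (2*d) == 0]|.
    by apply: eq_card => x; rewrite !inE col0_q1.
  apply: card_res; first by rewrite muln_gt0.
  by rewrite Hn /mm /= mulnA.
have E1 : #|[set x : 'I_n | colF d 1 r x == 1]| = 3.
  rewrite (@card_seq n (fun x => colF d 1 r x == 1) [:: 1 * d + 0; 2 * d + r; 3 * d + r]) //.
  - rewrite /= !inE !eqn_pair //=.
  - rewrite /= Hn /mm /=; apply/and4P; split => //; lia.
  - by move=> x Hx; rewrite col1_q1 // -[4 * d]/(mm 1 * d) -Hn.
by rewrite E0 E1.
Qed.

Lemma mem_cyc_edge k l m (x : 'I_(m * (k - l))) i :
  (x \in cyc_edge k l m i) = [exists t : 'I_k, val x == (i*(k-l) + t) %% (m*(k-l))].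
Proof. by rewrite inE. Qed.

Lemma modn_inj_small a t t' n : t < n -> t' < n ->
  (a + t) %% n = (a + t') %% n -> t = t'.
Proof.
move=> tn t'n /eqP; rewrite eqn_modDl !modn_small // => /eqP //.
Qed.

Lemma cyc_edge_card k l m i : 0 < k -> k <= m * (k - l) ->
  #|cyc_edge k l m i| = k.
Proof.
move=> k0 kn; set n := m * (k - l).
have n0 : 0 < n by apply: leq_trans kn.
pose g (t : 'I_k) : 'I_n := Ordinal (ltn_pmod (i * (k - l) + t) n0).
have -> : cyc_edge k l m i = [set g t | t : 'I_k].
  apply/setP => x; rewrite mem_cyc_edge; apply/existsP/imsetP => [[t /eqP Ht]|[t _ ->]].
    by exists t => //; apply: val_inj.
  by exists t.
rewrite card_imset ?card_ord // => t t' /(congr1 val) /= H.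
apply: val_inj; apply: modn_inj_small H; apply: leq_trans kn; done.
Qed.

Lemma cyc_edge_int k l m i : 0 < l -> l < k -> (k - l) + k <= m * (k - l) -> i < m ->
  #|cyc_edge k l m i :&: cyc_edge k l m (i.+1 %% m)| = l.
Proof.
move=> l0 lk kn im; set d := k - l; set n := m * d.
have n0 : 0 < n by rewrite /n /d; lia.
have m0 : 0 < m by move: n0; rewrite /n muln_gt0 => /andP [].
pose g (t : 'I_l) : 'I_n := Ordinal (ltn_pmod (i * d + d + t) n0).
have E2 : forall t2, (i.+1 %% m * d + t2) %% n = (i * d + d + t2) %% n.
  move=> t2; rewrite muln_modl modnDml /n.
  by rewrite mulSn (addnC d).
have -> : cyc_edge k l m i :&: cyc_edge k l m (i.+1 %% m) = [set g t | t : 'I_l].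
  apply/setP => x; rewrite inE !mem_cyc_edge -/d -/n.
  apply/andP/imsetP => [[/existsP [t1 /eqP H1] /existsP [t2 /eqP H2]] | [t _ ->]].
    rewrite E2 H1 -addnA in H2.
    have Ht' : (t1 : nat) = d + t2.
      by apply: (modn_inj_small _ _ H2); have := ltn_ord t1; have := ltn_ord t2; lia.
    have t2l : t2 < l by have := ltn_ord t1; rewrite /d in Ht'; lia.
    exists (Ordinal t2l) => //; apply: val_inj => /=.
    by rewrite H1 Ht' addnA.
  split; apply/existsP.
    have tk : d + t < k by rewrite /d; have := ltn_ord t; lia.
    by exists (Ordinal tk); rewrite /= addnA.
  have tk : t < k by have := ltn_ord t; lia.
  by exists (Ordinal tk); rewrite /= E2.
rewrite card_imset ?card_ord // => t t' /(congr1 val) /= H.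
apply: val_inj; apply: modn_inj_small H; have := ltn_ord t; have := ltn_ord t'; lia.
Qed.

Module Lat.
Import GRing.Theory Num.Theory.
Local Open Scope ring_scope.


Definition Rep (VC VR : finType) (EC : {set {set VC}}) (ER : {set {set VR}})
  (w : VR -> int) : Prop :=
  exists c : {ffun {ffun VC -> VR} -> int},
    forall v, w v = \sum_(phi | is_hom EC ER phi) c phi * (ind phi v)%:Z.

Lemma Rep_ext (VC VR : finType) EC ER (w w' : VR -> int) :
  (forall v, w v = w' v) -> @Rep VC VR EC ER w -> Rep EC ER w'.
Proof. by move=> H [c Hc]; exists c => v; rewrite -H. Qed.

Lemma Rep0 (VC VR : finType) EC ER : @Rep VC VR EC ER (fun _ => 0).
Proof. by exists [ffun=> 0] => v; rewrite big1 // => phi _; rewrite ffunE mul0r. Qed.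

Lemma Rep_add (VC VR : finType) EC ER (w1 w2 : VR -> int) :
  @Rep VC VR EC ER w1 -> Rep EC ER w2 -> Rep EC ER (fun v => w1 v + w2 v).
Proof.
move=> [c1 H1] [c2 H2]; exists [ffun phi => c1 phi + c2 phi] => v.
rewrite H1 H2 -big_split /=; apply: eq_bigr => phi _.
by rewrite ffunE mulrDl.
Qed.

Lemma Rep_scale (VC VR : finType) EC ER (z : int) (w : VR -> int) :
  @Rep VC VR EC ER w -> Rep EC ER (fun v => z * w v).
Proof.
move=> [c H]; exists [ffun phi => z * c phi] => v.
rewrite H mulr_sumr; apply: eq_bigr => phi _.
by rewrite ffunE mulrA.
Qed.

Lemma Rep_ind (VC VR : finType) EC ER (psi : {ffun VC -> VR}) :
  is_hom EC ER psi -> @Rep VC VR EC ER (fun v => (ind psi v)%:Z).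
Proof.
move=> Hp; exists [ffun phi => (phi == psi)%:Z] => v.
rewrite (bigD1 psi) //= ffunE eqxx mul1r big1 ?addr0 // => phi /andP[_ Hne].
by rewrite ffunE (negbTE Hne) mul0r.
Qed.

Lemma Rep_sum_seq (VC VR : finType) EC ER (U : Type) (s : seq U)
   (f : U -> VR -> int) :
  (forall u, @Rep VC VR EC ER (f u)) ->
  Rep EC ER (fun v => \sum_(u <- s) f u v).
Proof.
move=> H; elim: s => [|u s IH].
  by apply: Rep_ext (Rep0 EC ER) => v; rewrite big_nil.
apply: Rep_ext (Rep_add (H u) IH) => v.
by rewrite big_cons.
Qed.

Lemma ind_sum_nat (VC VR : finType) (phi : {ffun VC -> VR}) v :
  ind phi v = (\sum_(x : VC) (phi x == v))%N.
Proof.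
rewrite /ind -sum1_card big_mkcond /=; apply: eq_bigr => x _.
by rewrite inE; case: (phi x == v).
Qed.

Lemma sum_ind (VC VR : finType) (phi : {ffun VC -> VR}) :
  (\sum_(v : VR) ind phi v)%N = #|VC|.
Proof.
under eq_bigr do rewrite ind_sum_nat.
rewrite exchange_big /= -sum1_card; apply: eq_bigr => x _.
rewrite (bigD1 (phi x)) //= eqxx big1 ?addn0 // => v /negbTE.
by rewrite eq_sym => ->.
Qed.

Lemma sum_ind_int (VC VR : finType) (phi : {ffun VC -> VR}) :
  \sum_(v : VR) (ind phi v)%:Z = #|VC|%:Z.
Proof. by rewrite -(sum_ind phi) (big_morph _ PoszD (erefl 0%:Z)). Qed.

Lemma lattice_of_diffs (VC VR : finType) EC ER :
  (forall v0 : VR, exists2 phi0 : {ffun VC -> VR}, is_hom EC ER phi0 & True) ->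
  (forall u v : VR, Rep EC ER (fun w => (w == u)%:Z - (w == v)%:Z)) ->
  lattice_complete EC ER.
Proof.
move=> Hphi Hd b Hdiv.
case: (pickP (@predT VR)) => [v0 _ | Hnone]; last first.
  by exists 0 => v; move: (Hnone v).
have [phi0 Hh _] := Hphi v0.
set S := \sum_(v : VR) b v in Hdiv.
set s := (S %/ #|VC|%:Z)%Z.
set w := fun u => b u - s * (ind phi0 u)%:Z.
have Sw : \sum_u w u = 0.
  rewrite /w sumrB -mulr_sumr sum_ind_int /s divzK //.
  by rewrite subrr.
have H1 : Rep EC ER (fun v => s * (ind phi0 v)%:Z +
     \sum_(u <- index_enum VR) w u * ((v == u)%:Z - (v == v0)%:Z)).
  apply: Rep_add; first exact: Rep_scale (Rep_ind Hh).
  apply: Rep_sum_seq => u; exact: Rep_scale (Hd u v0).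
have [c Hc] := H1; exists c => v; rewrite -Hc.
have -> : \sum_(u <- index_enum VR) w u * ((v == u)%:Z - (v == v0)%:Z)
    = w v.
  rewrite -/(\sum_(u : VR) _).
  under eq_bigr do rewrite mulrBr.
  rewrite sumrB -mulr_suml Sw mul0r subr0.
  rewrite (bigD1 v) //= eqxx mulr1 big1 ?addr0 // => u /negbTE.
  by rewrite eq_sym => ->; rewrite mulr0.
by rewrite /w addrC subrK.
Qed.

Definition cnt (VC : finType) k (phi : VC -> 'I_k) (c : 'I_k) :=
  #|[set x | phi x == c]|.

Definition psi_of (VC V : finType) k (h : 'I_k -> V) (phi : VC -> 'I_k)
  (g : {perm 'I_k}) : {ffun VC -> V} := [ffun x => h (g (phi x))].

Lemma psi_hom (VC V : finType) (EC : {set {set VC}}) (E : {set {set V}}) k (h : 'I_k -> V) (phi : VC -> 'I_k)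
  (e : {set V}) (g : {perm 'I_k}) :
  e \in E -> (forall c, h c \in e) -> (forall v, v \in e -> exists c, v = h c) ->
  (forall f, f \in EC -> forall c, exists2 x, x \in f & phi x = c) ->
  is_hom EC E (psi_of h phi g).
Proof.
move=> He Hin Hsurj Hrb; apply/forall_inP => f Hf.
suff -> : [set psi_of h phi g x | x in f] = e by [].
apply/setP => v; apply/imsetP/idP => [[x _ ->]|Hv].
  by rewrite ffunE.
have [c ->] := Hsurj v Hv.
have [x Hx Hpx] := Hrb f Hf ((g^-1)%g c).
by exists x => //; rewrite ffunE Hpx permKV.
Qed.

Lemma ind_psi_in (VC V : finType) k (h : 'I_k -> V) (phi : VC -> 'I_k)
  (g : {perm 'I_k}) c :
  injective h -> ind (psi_of h phi g) (h c) = cnt phi ((g^-1)%g c).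
Proof.
move=> Hinj; rewrite /ind /cnt; apply: eq_card => x.
rewrite !inE ffunE (inj_eq Hinj).
by rewrite (can2_eq (permK g) (permKV g)).
Qed.

Lemma ind_psi_out (VC V : finType) k (h : 'I_k -> V) (phi : VC -> 'I_k)
  (g : {perm 'I_k}) v :
  (forall c, v != h c) -> ind (psi_of h phi g) v = 0%N.
Proof.
move=> Hv; rewrite /ind; apply/eqP; rewrite cards_eq0; apply/eqP/setP => x.
by rewrite !inE ffunE eq_sym (negbTE (Hv _)).
Qed.

Lemma edge_diff (VC V : finType) (EC : {set {set VC}}) (E : {set {set V}}) k
  (h : 'I_k -> V) (phi : VC -> 'I_k) (e : {set V}) (a b c : 'I_k) :
  e \in E -> injective h -> (forall c, h c \in e) ->
  (forall v, v \in e -> exists c, v = h c) ->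
  (forall f, f \in EC -> forall c, exists2 x, x \in f & phi x = c) ->
  a != b -> c != b -> cnt phi b = (cnt phi a).+1 ->
  Rep EC E (fun w => (w == h c)%:Z - (w == h b)%:Z).
Proof.
move=> He Hinj Hin Hsurj Hrb Hab Hcb Hcnt.
set g1 := tperm a c.
set g2 := (tperm a b * tperm a c)%g.
have H1 := Rep_ind (psi_hom g1 He Hin Hsurj Hrb).
have H2 := Rep_ind (psi_hom g2 He Hin Hsurj Hrb).
apply: Rep_ext (Rep_add H2 (Rep_scale (-1) H1)) => w.
case: (pickP [pred c' | w == h c']) => [c' /eqP -> | Hno]; last first.
  have Hout : forall c', w != h c' by move=> c'; move: (Hno c') => /= ->.
  rewrite !ind_psi_out // (negbTE (Hout c)) (negbTE (Hout b)).
  by rewrite mulr0 addr0.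
rewrite !ind_psi_in // !(inj_eq Hinj).
rewrite /g1 /g2 invMg !tpermV permM.
set y := tperm a c c'.
have Hya : (y == a) = (c' == c) by rewrite /y (can2_eq (tpermK _ _) (tpermK _ _)) tpermL.
have Hyb : (y == b) = (c' == b).
  by rewrite /y (can2_eq (tpermK _ _) (tpermK _ _)) tpermD.
case: (eqVneq c' c) => [Ec | Nc].
  move: Hya; rewrite Ec eqxx (negbTE Hcb) => /eqP ->.
  rewrite tpermL Hcnt.
  by rewrite mulN1r -addn1 PoszD addrAC subrr add0r.
case: (eqVneq c' b) => [Eb | Nb].
  move: Hyb; rewrite Eb eqxx => /eqP ->.
  rewrite tpermR Hcnt mulN1r -addn1 PoszD.
  by rewrite opprD addrA subrr.
have Nya : y != a by rewrite Hya.
have Nyb : y != b by rewrite Hyb.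
rewrite tpermD 1?eq_sym //.
by rewrite mulN1r subrr.
Qed.

Lemma edge_bij (V : finType) (e : {set V}) k : #|e| = k ->
  exists h : 'I_k -> V, [/\ injective h, (forall c, h c \in e) &
     (forall v, v \in e -> exists c, v = h c)].
Proof.
move=> He.
exists (fun c => enum_val (cast_ord (esym He) c)); split.
- by move=> c1 c2 /enum_val_inj /cast_ord_inj.
- by move=> c; apply: enum_valP.
- move=> v Hv; exists (cast_ord He (enum_rank_in Hv v)).
  by rewrite cast_ordK enum_rankK_in.
Qed.

Lemma lattice_from_coloring (VC V : finType) (EC : {set {set VC}})
  (E : {set {set V}}) k l (phi : VC -> 'I_k) (a b : 'I_k) :
  (1 <= l)%N -> kgraph k E -> l_connected l E -> a != b ->
  (forall f, f \in EC -> forall c, exists2 x, x \in f & phi x = c) ->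
  cnt phi b = (cnt phi a).+1 ->
  lattice_complete EC E.
Proof.
move=> Hl Hk [Hiso Hconn] Hab Hrb Hcnt.
have Hedge : forall e, e \in E -> forall u v, u \in e -> v \in e ->
    Rep EC E (fun w => (w == u)%:Z - (w == v)%:Z).
  move=> e He u v Hu Hv.
  have [h [Hinj Hin Hsurj]] := edge_bij (Hk e He).
  have Hc : forall c, Rep EC E (fun w => (w == h c)%:Z - (w == h b)%:Z).
    move=> c; case: (eqVneq c b) => [-> | Hcb].
      by apply: Rep_ext (Rep0 EC E) => w; rewrite subrr.
    exact: edge_diff He Hinj Hin Hsurj Hrb Hab Hcb Hcnt.
  have [c1 ->] := Hsurj u Hu; have [c2 ->] := Hsurj v Hv.
  apply: Rep_ext (Rep_add (Hc c1) (Rep_scale (-1) (Hc c2))) => w.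
  by rewrite mulN1r opprB addrA subrK.
have Htrans : forall u w v, Rep EC E (fun x => (x == u)%:Z - (x == w)%:Z) ->
    Rep EC E (fun x => (x == w)%:Z - (x == v)%:Z) ->
    Rep EC E (fun x => (x == u)%:Z - (x == v)%:Z).
  move=> u w v H1 H2; apply: Rep_ext (Rep_add H1 H2) => x.
  by rewrite addrA subrK.
apply: lattice_of_diffs.
  move=> v0; have [e He _] := Hiso v0.
  have [h [Hinj Hin Hsurj]] := edge_bij (Hk e He).
  exists (psi_of h phi 1%g) => //.
  exact: psi_hom He Hin Hsurj Hrb.
move=> u v.
have [e1 He1 Hu] := Hiso u; have [e2 He2 Hv] := Hiso v.
have := Hconn e1 e2 He1 He2; case/connectP => p Hp Hlast.
rewrite Hlast in Hv; clear Hlast He2 e2.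
elim: p u e1 He1 Hu Hp Hv => [|f p IH] u e1 He1 Hu /= Hp Hv.
  exact: Hedge He1 u v Hu Hv.
move/andP: Hp => [Hadj Hp].
move/and3P: Hadj => [_ Hf Hint].
have : (0 < #|e1 :&: f|)%N by apply: leq_trans Hint.
rewrite card_gt0 => /set0Pn [w]; rewrite inE => /andP [Hw1 Hw2].
apply: (Htrans u w v); first exact: Hedge He1 u w Hu Hw1.
exact: IH w f Hf Hw2 Hp Hv.
Qed.

End Lat.
Import Lat.

Theorem lemma5p1 (k l : nat) (V : finType) (E : {set {set V}}) :
  1 <= l -> l <= k - 1 -> ~~ ((k - l) %| k) ->
  kgraph k E -> l_connected l E ->
  exists m : nat,
    [/\ is_lcycle k l m,
        #|cyc_edges k l m| <= k ^ 4,
        kpartite k (cyc_edges k l m)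
      & lattice_complete (cyc_edges k l m) E].
Proof.
move=> l1 lk ndiv Hk Hc.
have d0 : 0 < k - l by lia.
have dk : k - l < k by lia.
move: ndiv; rewrite /dvdn => ndiv.
have kE := divn_eq k (k - l).
set d := k - l in d0 dk ndiv kE *.
set q := k %/ d in kE *; set r := k %% d in ndiv kE *.
have r0 : 0 < r by rewrite lt0n.
have rd : r < d by rewrite /r ltn_pmod.
have q0 : 0 < q by rewrite /q divn_gt0 // ltnW.
have k0 : 0 < k by lia.
have qk : q <= k by rewrite /q leq_div.
have dkn : d + k <= mm q * d.
  rewrite /mm; case: (eqVneq q 1) => [q1 | q1].
    by rewrite kE q1; lia.
  have q2 : 1 < q by lia.
  rewrite kE; nia.
have Hlt : forall x, colF d q r x < k by move=> x; rewrite kE; apply: colF_lt.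
set m := mm q.
set n := m * d.
have n0 : 0 < n by lia.
pose phi (x : 'I_(m * (k - l))) : 'I_k := Ordinal (Hlt x).
have Hrb : forall f, f \in cyc_edges k l m -> forall c, exists2 x, x \in f & phi x = c.
  move=> f /imsetP [i _ ->] c.
  have key : forall c', c' < k -> exists2 t, t < k & colF d q r (i * d + t) = c'.
    move=> c' Hc'; rewrite kE; case: (eqVneq q 1) => [q1 | q1].
      rewrite q1 mul1n; apply: rainbow_q1 => //.
      by rewrite -[d](mul1n) -q1 -kE.
    apply: rainbow_q2 => //; first lia.
    by rewrite -kE.
  have [t tk Ht] := key c (ltn_ord c).
  exists (Ordinal (ltn_pmod (i * d + t) n0)).
    by rewrite mem_cyc_edge; apply/existsP; exists (Ordinal tk).
  by apply: val_inj => /=; rewrite colF_period.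
exists m; split.
- move=> i im; split.
    by apply: cyc_edge_card => //; lia.
  by apply: cyc_edge_int => //; lia.
- apply: leq_trans (leq_imset_card _ _) _; rewrite card_ord /m /mm.
  case: (eqVneq q 1) => _.
    rewrite (_ : 4 = 2 ^ 2) //; apply: leq_trans (_ : 2 ^ 2 <= k ^ 2) _.
      by rewrite leq_exp2r //; lia.
    by rewrite leq_pexp2l //; lia.
  have : k * (k + 1) <= k ^ 4.
    by rewrite (_ : k ^ 4 = k * (k * (k * k))) ?leq_mul2l ?expnS ?expn0 ?muln1 //; nia.
  nia.
- exists phi => e He p.
  have Hcard : #|e| = k.
    by move: He => /imsetP [i _ ->]; apply: cyc_edge_card => //; lia.
  have Himg : phi @: e = setT.
    apply/setP => c; rewrite inE; have [x Hx <-] := Hrb e He c.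
    by rewrite imset_f.
  have Hinj : {in e &, injective phi}.
    by apply/imset_injP; rewrite Himg cardsT card_ord Hcard.
  have [x Hx Hpx] := Hrb e He p.
  rewrite (_ : [set v in e | phi v == p] = [set x]) ?cards1 //.
  apply/setP => y; rewrite !inE; apply/andP/eqP => [[Hy /eqP Hpy]|->].
    by apply: Hinj => //; rewrite Hpy Hpx.
  by rewrite Hx Hpx eqxx.
- case: (eqVneq q 1) => [q1 | q1].
    have a0 : 0 < k by [].
    have b1 : 1 < k by lia.
    apply: (@lattice_from_coloring _ _ _ _ k l phi (Ordinal a0) (Ordinal b1)) => //.
    rewrite /cnt.
    have E1 : forall c (Hc : c < k), #|[set x | phi x == Ordinal Hc]| =
                #|[set x : 'I_(m * (k - l)) | colF d q r x == c]|.
      by move=> c Hc'; apply: eq_card => x; rewrite !inE.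
    rewrite !E1 (_ : colF d q r = colF d 1 r); last by rewrite q1.
    by apply: counts_q1 => //; rewrite /m q1.
  have q2 : 1 < q by lia.
  have a0 : 0 < k by [].
  have bk : r * (q + 1) < k by rewrite kE; nia.
  apply: (@lattice_from_coloring _ _ _ _ k l phi (Ordinal a0) (Ordinal bk)) => //.
    by apply/eqP => /(congr1 val) /= /esym /eqP; rewrite muln_eq0 addn1 /=; lia.
  rewrite /cnt.
  have E1 : forall c (Hc : c < k), #|[set x | phi x == Ordinal Hc]| =
              #|[set x : 'I_(m * (k - l)) | colF d q r x == c]|.
    by move=> c Hc'; apply: eq_card => x; rewrite !inE.
  rewrite !E1 /=.
  exact: (@counts_q2 d q r (m * (k - l)) r0 rd q2 erefl).
exact: bk.
Qed.
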